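(* Let $G$ be an $n\times n$ Game of Primes grid (defined in the context) with update map $F$, and let $s_0, s_1, s_2,\dots$ be its sequence of days, where $s_0$ is the configuration in which every cell is dormant and $s_{t+1}=F(s_t)$ for all $t\ge 0$. Let $S=\{s_t : t\ge 0\}$ be the set of all distinct days that occur. Then for every day $k$, there are at most two days $a\in S$ with $F(a)=k$.
   Context: A Game of Primes (GOPM) grid of dimension $n$ is an $n\times n$ grid whose cells are filled with the $n^2$ natural numbers $a, a+d, a+2d,\dots,a+(n^2-1)d$ (for fixed integers $a\ge 1$, $d\ge 1$) in snake-like (boustrophedon) order: the first row is filled left to right starting with $a$ in the top-left cell, the second row right to left, the third row left to right, and so on. Two distinct cells are neighbors if they are adjacent horizontally, vertically or diagonally (so each cell has at most 8 neighbors, a corner cell exactly 3). Each cell is in one of two states, excited or dormant. A configuration (''day'') is an assignment of a state to every cell. For a configuration $s$ and a cell $c$, let $N_s(c)$ be the number of neighbors of $c$ that contain a prime number or are excited in $s$ (or both). The update map $F$ sends $s$ to the configuration $F(s)$ in which: a cell $c$ dormant in $s$ is excited in $F(s)$ iff $N_s(c)\ge 3$; a cell $c$ excited in $s$ is dormant in $F(s)$ iff $N_s(c)\ge 4$ or $N_s(c)=0$, and otherwise remains excited. Day $0$ is the configuration with all cells dormant, and day $t+1$ is $F$ applied to day $t$. *)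

(* Defs.v *)
From mathcomp Require Import all_boot.
Set Implicit Arguments. Unset Strict Implicit. Unset Printing Implicit Defensive.

(* Cells of an n x n grid: (row, column), rows/columns indexed from 0,
   row 0 is the top row, column 0 the leftmost column. *)
Definition cell (n : nat) := ('I_n * 'I_n)%type.

(* A configuration ("day"): true = excited, false = dormant. *)
Definition config (n : nat) := {ffun cell n -> bool}.

Definition snake_index (n : nat) (c : cell n) : nat :=
  let i := nat_of_ord c.1 in let j := nat_of_ord c.2 in
  if odd i then i * n + (n - 1 - j) else i * n + j.

Definition gopm_value (n a d : nat) (c : cell n) : nat := a + snake_index c * d.

Definition neighbor (n : nat) (c c' : cell n) : bool :=
  [&& c != c',
      nat_of_ord c.1 <= (nat_of_ord c'.1).+1, nat_of_ord c'.1 <= (nat_of_ord c.1).+1,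
      nat_of_ord c.2 <= (nat_of_ord c'.2).+1 & nat_of_ord c'.2 <= (nat_of_ord c.2).+1].

Definition active_neighbors (n a d : nat) (s : config n) (c : cell n) : nat :=
  #|[set c' : cell n | neighbor c c' && (prime (gopm_value a d c') || s c')]|.

Definition gopm_step (n a d : nat) (s : config n) : config n :=
  [ffun c => let N := active_neighbors a d s c in
             if s c then ~~ ((4 <= N) || (N == 0)) else 3 <= N].

Definition day0 (n : nat) : config n := [ffun => false].

Definition day (n a d : nat) (t : nat) : config n := iter t (gopm_step a d) (day0 n).
Arguments day : clear implicits.

Definition occurs (n a d : nat) (s : config n) : Prop := exists t, s = day n a d t.

(* Main.v *)
Require Import Defs.
From mathcomp Require Import all_boot.
From mathcomp Require Import zify.

Lemma per_shift (T : Type) (f : T -> T) x0 a p m k :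
  iter a f x0 = iter (a + p) f x0 ->
  iter (a + m) f x0 = iter (a + m + k * p) f x0.
Proof.
move=> H; elim: k => [|k IH]; first by rewrite mul0n addn0.
rewrite IH.
have -> : a + m + k.+1 * p = m + k * p + (a + p) by rewrite mulSn; lia.
have -> : a + m + k * p = m + k * p + a by lia.
by rewrite [LHS]iterD [RHS]iterD H.
Qed.

Lemma core (T : Type) (f : T -> T) x0 i p r :
  f (iter i f x0) = f (iter (i + p.+1) f x0) ->
  f (iter i f x0) = f (iter (i + r.+1) f x0) ->
  iter (i + p.+1) f x0 = iter (i + r.+1) f x0.
Proof.
rewrite -!iterS => H1 H2.
have H1' : iter i.+1 f x0 = iter (i.+1 + p.+1) f x0 by rewrite H1 addSn.
have H2' : iter i.+1 f x0 = iter (i.+1 + r.+1) f x0 by rewrite H2 addSn.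
have E1 := @per_shift T f x0 i.+1 p.+1 p r H1'.
have E2 := @per_shift T f x0 i.+1 r.+1 r p H2'.
have -> : i + p.+1 = i.+1 + p by lia.
have -> : i + r.+1 = i.+1 + r by lia.
rewrite E1 E2.
have -> : i.+1 + p + r * p.+1 = i.+1 + r + p * r.+1 by nia.
by [].
Qed.

Lemma core2 (T : Type) (f : T -> T) x0 i j l :
  i < j -> j < l ->
  f (iter i f x0) = f (iter j f x0) ->
  f (iter i f x0) = f (iter l f x0) ->
  iter j f x0 = iter l f x0.
Proof.
move=> hij hjl H1 H2.
have [p Ej] : exists p, j = i + p.+1 by exists (j - i).-1; lia.
rewrite Ej in H1 *.
have [r Er] : exists r, l = i + r.+1 by exists (l - i).-1; lia.
rewrite Er in H2 *.
exact: (@core _ f x0 i p r H1 H2).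
Qed.

Theorem theorem4p1 (n a d : nat) (ha : 1 <= a) (hd : 1 <= d) (k : config n) :
  forall x y z : config n,
    occurs a d x -> occurs a d y -> occurs a d z ->
    gopm_step a d x = k -> gopm_step a d y = k -> gopm_step a d z = k ->
    x = y \/ x = z \/ y = z.
Proof.
move=> x y z [i ->] [j ->] [l ->]; rewrite /day => Hx Hy Hz.
set f := gopm_step a d.
have Exy : f (iter i f (day0 n)) = f (iter j f (day0 n)) by rewrite /f Hx Hy.
have Exz : f (iter i f (day0 n)) = f (iter l f (day0 n)) by rewrite /f Hx Hz.
have Eyz : f (iter j f (day0 n)) = f (iter l f (day0 n)) by rewrite /f Hy Hz.
case: (ltngtP i j) => hij; last by left; rewrite hij.
- case: (ltngtP j l) => hjl; last by right; right; rewrite hjl.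
  + by right; right; apply: (@core2 _ f (day0 n) _ _ _ hij hjl); rewrite /f ?Hx ?Hy ?Hz.
  + case: (ltngtP i l) => hil; last by right; left; rewrite hil.
    * by right; right; symmetry; apply: (@core2 _ f (day0 n) _ _ _ hil hjl); rewrite /f ?Hx ?Hy ?Hz.
    * by left; apply: (@core2 _ f (day0 n) _ _ _ hil hij); rewrite /f ?Hx ?Hy ?Hz.
- case: (ltngtP i l) => hil; last by right; left; rewrite hil.
  + by right; left; apply: (@core2 _ f (day0 n) _ _ _ hij hil); rewrite /f ?Hx ?Hy ?Hz.
  + case: (ltngtP j l) => hjl; last by right; right; rewrite hjl.
    * by right; left; symmetry; apply: (@core2 _ f (day0 n) _ _ _ hjl hil); rewrite /f ?Hx ?Hy ?Hz.
    * by left; symmetry; apply: (@core2 _ f (day0 n) _ _ _ hjl hij); rewrite /f ?Hx ?Hy ?Hz.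
Qed.
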